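(* Let $n\ge6$ and $C=(v_0,v_{n-2},v_2)$. Then $|H_n^{(3)}(C)|=\min_{C'}|H_n^{(3)}(C')|$, where $C'$ ranges over all $3$-valid tuples of length $3$ in $\Omega_n$.
   Context: $\Omega_n=\{v_0,\dots,v_{n-1}\}$ with cyclic order $v_0<\dots<v_{n-1}<v_0$, indices mod $n$. For distinct vertices $u,w$, $(u,w)$ is the set of vertices strictly between $u$ and $w$ moving clockwise from $u$ to $w$, and $[u,w]=(u,w)\cup\{u,w\}$. A tuple $(w_1,w_2,w_3)$ of distinct vertices is semi-valid if $w_1<w_3<w_2<w_1$ in clockwise cyclic order, and $3$-valid if moreover $|[w_i,w_{i-1}]|\ge3$ for $i=1,2,3$ (indices mod 3). $H_n^{(3)}(C)=\{e\in\binom{\Omega_n}{3}: e\cap[w_i,w_{i-1}]\neq\emptyset\ \text{for } i=1,2,3\}$. *)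

(* Defs.v *)
From mathcomp Require Import all_boot.
Set Implicit Arguments. Unset Strict Implicit. Unset Printing Implicit Defensive.

(* Omega_n = 'I_n, vertex v_k is the ordinal k; clockwise = increasing index mod n.
   Vertices of tuples are given as natural numbers k (meaning v_k), required < n. *)

Definition cdist (n u x : nat) : nat := (x + n - u) %% n.

Definition carc (n u w : nat) : {set 'I_n} :=
  [set x : 'I_n | cdist n u x <= cdist n u w].

(* (w1,w2,w3) semi-valid: distinct vertices with w1 < w3 < w2 < w1 cyclically *)
Definition semivalid (n w1 w2 w3 : nat) : bool :=
  [&& w1 < n, w2 < n, w3 < n, w1 != w2, w2 != w3, w1 != w3 &
      cdist n w1 w3 < cdist n w1 w2].

Definition threevalid (n w1 w2 w3 : nat) : bool :=
  [&& semivalid n w1 w2 w3,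
      3 <= #|carc n w1 w3|, 3 <= #|carc n w2 w1| & 3 <= #|carc n w3 w2|].

Definition H3 (n w1 w2 w3 : nat) : {set {set 'I_n}} :=
  [set e : {set 'I_n} | [&& #|e| == 3,
      e :&: carc n w1 w3 != set0, e :&: carc n w2 w1 != set0 &
      e :&: carc n w3 w2 != set0]].

(* Main.v *)
Require Import Defs.
From mathcomp Require Import all_boot zify.
From Stdlib Require Import ZArith.

Lemma cdistE n u x : u < n -> x < n ->
  cdist n u x = if u <= x then x - u else x + n - u.
Proof.
move=> hu hx; rewrite /cdist; case: leqP => h.
  have -> : x + n - u = (x - u) + n by lia.
  by rewrite modnDr modn_small //; lia.
by rewrite modn_small //; lia.
Qed.

Lemma count_iota_int lo hi m :
  count (fun k : nat => lo <= k <= hi) (iota 0 m) = minn m hi.+1 - lo.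
Proof.
elim: m => [|m IH]; first by rewrite /= min0n.
rewrite -addn1 iotaD count_cat IH /= add0n addn0.
case: (leqP lo m) => h1; case: (leqP m hi) => h2 /=; lia.
Qed.

Lemma card_int n lo hi : hi < n ->
  #|[set k : 'I_n | lo <= k <= hi]| = hi.+1 - lo.
Proof.
move=> hn.
have -> : #|[set k : 'I_n | lo <= k <= hi]| =
   count (fun k : nat => lo <= k <= hi) (map val (enum 'I_n)).
  rewrite count_map cardE /enum_mem size_filter -enumT /=.
  rewrite filter_predT; apply: eq_count => k; by rewrite /= inE.
rewrite val_enum_ord count_iota_int; lia.
Qed.

Definition rot n u (hn : 0 < n) (x : 'I_n) : 'I_n := Ordinal (ltn_pmod (x + n - u) hn).

Lemma rot_inj n u (hn : 0 < n) : u < n -> injective (rot n u hn).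
Proof.
move=> hu x y /(congr1 val) /=; rewrite -/(cdist n u x) -/(cdist n u y).
rewrite !cdistE //; move=> h; apply: val_inj => /=; move: h.
move: (ltn_ord x) (ltn_ord y); case: (leqP u x); case: (leqP u y); lia.
Qed.

Lemma card_arcset n u (A : {set 'I_n}) lo hi : u < n -> hi < n ->
  (forall x : 'I_n, (x \in A) = (lo <= cdist n u x <= hi)) -> #|A| = hi.+1 - lo.
Proof.
move=> hu hh hA; have hn : 0 < n by lia.
have -> : A = rot n u hn @^-1: [set k : 'I_n | lo <= k <= hi].
  by apply/setP => x; rewrite !inE hA.
by rewrite card_preimset ?card_int //; apply: rot_inj.
Qed.

Lemma cdist_lt n u x : u < n -> cdist n u x < n.
Proof. by move=> hu; rewrite /cdist ltn_pmod //; lia. Qed.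

Lemma card_carc n u w : u < n -> w < n -> #|carc n u w| = (cdist n u w).+1.
Proof.
move=> hu hw; rewrite (@card_arcset n u _ 0 (cdist n u w)) ?subn0 //.
  exact: cdist_lt.
by move=> x; rewrite inE.
Qed.

Ltac cdsplit := repeat match goal with |- context [if ?b then _ else _] => case: (boolP b) => ? end.

Lemma test n (w1 w2 w3 x : 'I_n) : semivalid n w1 w2 w3 ->
  (x \in ~: carc n w1 w3 :&: ~: carc n w2 w1) = (1 <= cdist n w3 x <= (cdist n w3 w2).-1).
Proof.
rewrite /semivalid /carc !inE -!ltnNge.
move: (ltn_ord w1) (ltn_ord w2) (ltn_ord w3) (ltn_ord x).
move: (w1 : nat) (w2 : nat) (w3 : nat) (x : nat) => a b c y ha hb hc hy.
rewrite !cdistE //; cdsplit; lia.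
Qed.

Section Count.
Variable T : finType.
Definition S3 (X : {set T}) := [set e : {set T} | e \subset X & #|e| == 3].

Lemma S3I X Y : S3 X :&: S3 Y = S3 (X :&: Y).
Proof. by apply/setP => e; rewrite !inE subsetI; case: (e \subset X); case: (e \subset Y); case: (#|e| == 3). Qed.

Lemma cardS3 X : #|S3 X| = 'C(#|X|, 3).
Proof. exact: cards_draws. Qed.

Lemma count3 (A1 A2 A3 : {set T}) :
  #|[set e : {set T} | [&& #|e| == 3, e :&: A1 != set0, e :&: A2 != set0 &
      e :&: A3 != set0]]|
  + 'C(#|~:A1|,3) + 'C(#|~:A2|,3) + 'C(#|~:A3|,3) + 'C(#|~:A1 :&: ~:A2 :&: ~:A3|,3)
  = 'C(#|T|,3) + 'C(#|~:A1 :&: ~:A2|,3) + 'C(#|~:A1 :&: ~:A3|,3) + 'C(#|~:A2 :&: ~:A3|,3).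
Proof.
set U := S3 (~:A1) :|: S3 (~:A2) :|: S3 (~:A3).
have -> : [set e : {set T} | [&& #|e| == 3, e :&: A1 != set0, e :&: A2 != set0 &
      e :&: A3 != set0]] = [set e : {set T} | #|e| == 3] :\: U.
  apply/setP => e; rewrite /U /S3 !inE !setI_eq0 !disjoints_subset.
  by case: (#|e| == 3); case: (e \subset ~: A1); case: (e \subset ~: A2); case: (e \subset ~: A3).
have hU : U \subset [set e : {set T} | #|e| == 3].
  by apply/subsetP => e; rewrite /U /S3 !inE; case/orP => [/orP[]|] /andP[].
have e1 : #|[set e : {set T} | #|e| == 3] :\: U| + #|U| = 'C(#|T|,3).
  rewrite cardsD (setIidPr hU) -card_draws subnK //; exact: subset_leq_card.
have e2 := cardsUI (S3 (~:A1) :|: S3 (~:A2)) (S3 (~:A3)).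
have e3 := cardsUI (S3 (~:A1)) (S3 (~:A2)).
rewrite setIUl in e2.
have e4 := cardsUI (S3 (~:A1) :&: S3 (~:A3)) (S3 (~:A2) :&: S3 (~:A3)).
rewrite !S3I in e2 e3 e4.
have E : (~: A1 :&: ~: A3) :&: (~: A2 :&: ~: A3) = ~: A1 :&: ~: A2 :&: ~: A3.
  by apply/setP => x; rewrite !inE; case: (x \in A1); case: (x \in A2); case: (x \in A3).
rewrite E in e4.
rewrite !cardS3 in e2 e3 e4.
rewrite -/U in e2.
lia.
Qed.
End Count.

Lemma H3count n (w1 w2 w3 : 'I_n) : semivalid n w1 w2 w3 ->
  #|H3 n w1 w2 w3| + 'C(n - (cdist n w1 w3).+1, 3) + 'C(n - (cdist n w2 w1).+1, 3)
   + 'C(n - (cdist n w3 w2).+1, 3)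
  = 'C(n, 3) + 'C((cdist n w3 w2).-1, 3) + 'C((cdist n w2 w1).-1, 3)
   + 'C((cdist n w1 w3).-1, 3).
Proof.
move=> hs.
have hn : 0 < n by move: (ltn_ord w1); lia.
have := count3 _ (carc n w1 w3) (carc n w2 w1) (carc n w3 w2).
rewrite card_ord -/(H3 n w1 w2 w3).
have cC : forall u w : 'I_n, #|~: carc n u w| = n - (cdist n u w).+1.
  move=> u w; have := cardsC (carc n u w); rewrite card_ord card_carc //; lia.
rewrite !cC.
have hd : forall u w : 'I_n, cdist n u w < n by move=> u w; apply: cdist_lt.
rewrite (@card_arcset n w1 (~: carc n w1 w3 :&: ~: carc n w2 w1 :&: ~: carc n w3 w2) 1 0) //; last first.
  move: hs => /=; rewrite /semivalid /carc => hs x; rewrite !inE -!ltnNge.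
  move: hs (ltn_ord w1) (ltn_ord w2) (ltn_ord w3) (ltn_ord x).
  move: (w1 : nat) (w2 : nat) (w3 : nat) (x : nat) => a b c y {}hs ha hb hc hy.
  rewrite !cdistE // in hs *; move: hs; cdsplit; lia.
rewrite (@card_arcset n w3 (~: carc n w1 w3 :&: ~: carc n w2 w1) 1 (cdist n w3 w2).-1) //; last first.
  - move: hs => /=; rewrite /semivalid /carc => hs x; rewrite !inE -!ltnNge.
    move: hs (ltn_ord w1) (ltn_ord w2) (ltn_ord w3) (ltn_ord x).
    move: (w1 : nat) (w2 : nat) (w3 : nat) (x : nat) => a b c y {}hs ha hb hc hy.
    rewrite !cdistE // in hs *; move: hs; cdsplit; lia.
  - have := hd w3 w2; lia.
rewrite (@card_arcset n w2 (~: carc n w1 w3 :&: ~: carc n w3 w2) 1 (cdist n w2 w1).-1) //; last first.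
  - move: hs => /=; rewrite /semivalid /carc => hs x; rewrite !inE -!ltnNge.
    move: hs (ltn_ord w1) (ltn_ord w2) (ltn_ord w3) (ltn_ord x).
    move: (w1 : nat) (w2 : nat) (w3 : nat) (x : nat) => a b c y {}hs ha hb hc hy.
    rewrite !cdistE // in hs *; move: hs; cdsplit; lia.
  - have := hd w2 w1; lia.
rewrite (@card_arcset n w1 (~: carc n w2 w1 :&: ~: carc n w3 w2) 1 (cdist n w1 w3).-1) //; last first.
  - move: hs => /=; rewrite /semivalid /carc => hs x; rewrite !inE -!ltnNge.
    move: hs (ltn_ord w1) (ltn_ord w2) (ltn_ord w3) (ltn_ord x).
    move: (w1 : nat) (w2 : nat) (w3 : nat) (x : nat) => a b c y {}hs ha hb hc hy.
    rewrite !cdistE // in hs *; move: hs; cdsplit; lia.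
  - have := hd w1 w3; lia.
by rewrite subnn bin0n /= addn0 !subn1 /=.
Qed.

Lemma keyZ (x y z : Z) : (0<=x -> 0<=y -> 0<=z ->
  let P (m:Z) := m*(m-1)*(m-2) in
  P (y+z+3) + P (x+z+3) + P (x+y+3) + P (x+y+z+1)
  <= 2* P (x+y+z+3) + 6 + P (x+1) + P (y+1) + P (z+1))%Z.
Proof. intros; unfold P; nia. Qed.

Lemma C3 k : 'C(k.+1,3)*6 + k.+1*k = k.+1*k*k.
Proof.
case: k => [|k]; first by [].
have := bin_ffact k.+2 3; rewrite !ffactnS ffactn0 /=.
have -> : 3`! = 6 by []. lia.
Qed.

Lemma key x y z :
  'C((y+z+2).+1,3)+'C((x+z+2).+1,3)+'C((x+y+2).+1,3) + 'C((x+y+z).+1,3)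
  <= 2*'C((x+y+z+2).+1,3) + 1 + 'C(x.+1,3)+'C(y.+1,3)+'C(z.+1,3).
Proof.
have h1 := C3 (y+z+2). have h2 := C3 (x+z+2). have h3 := C3 (x+y+2).
have h4 := C3 (x+y+z). have h5 := C3 (x+y+z+2). have h6 := C3 x. have h7 := C3 y.
have h8 := C3 z.
have := keyZ (Z.of_nat x) (Z.of_nat y) (Z.of_nat z); simpl.
move: h1 h2 h3 h4 h5 h6 h7 h8.
move: ('C((y+z+2).+1,3)) ('C((x+z+2).+1,3)) ('C((x+y+2).+1,3)) ('C((x+y+z).+1,3))
  ('C((x+y+z+2).+1,3)) ('C(x.+1,3)) ('C(y.+1,3)) ('C(z.+1,3)) => c1 c2 c3 c4 c5 c6 c7 c8.
move=> *; lia.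
Qed.

Lemma sv_sum n (w1 w2 w3 : 'I_n) : semivalid n w1 w2 w3 ->
  cdist n w1 w3 + cdist n w3 w2 + cdist n w2 w1 = n.
Proof.
rewrite /semivalid.
move: (ltn_ord w1) (ltn_ord w2) (ltn_ord w3).
move: (w1 : nat) (w2 : nat) (w3 : nat) => a b c ha hb hc.
rewrite !cdistE //; cdsplit; lia.
Qed.

Theorem lemma3p12 (n : nat) (hn : 6 <= n) :
  threevalid n 0 (n - 2) 2 /\
  forall w1 w2 w3 : 'I_n, threevalid n w1 w2 w3 ->
    #|H3 n 0 (n - 2) 2| <= #|H3 n w1 w2 w3|.
Proof.
have h0 : 0 < n by lia.
have h2 : 2 < n by lia.
have hm : n - 2 < n by lia.
have cA1 : cdist n 0 2 = 2 by rewrite cdistE //; lia.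
have cA2 : cdist n (n - 2) 0 = 2 by rewrite cdistE //; case: ifP; lia.
have cA3 : cdist n 2 (n - 2) = n - 4 by rewrite cdistE //; case: ifP; lia.
have cA4 : cdist n 0 (n - 2) = n - 2 by rewrite /cdist subn0 modnDr modn_small.
have t0 : threevalid n 0 (n - 2) 2.
  rewrite /threevalid /semivalid !card_carc // cA1 cA2 cA3 cA4; lia.
split => // w1 w2 w3 /and4P[hs c1 c2 c3].
pose o0 := Ordinal h0; pose om := Ordinal hm; pose o2 := Ordinal h2.
have s0 : semivalid n o0 om o2 by case/and4P: t0.
have E0 := H3count _ _ _ _ s0.
have -> : H3 n 0 (n - 2) 2 = H3 n o0 om o2 by [].
have e1 : cdist n o0 o2 = 2 := cA1.
have e2 : cdist n om o0 = 2 := cA2.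
have e3 : cdist n o2 om = n - 4 := cA3.
rewrite e1 e2 e3 in E0.
have E1 := H3count _ _ _ _ hs.
have hsum := sv_sum _ _ _ _ hs.
rewrite !card_carc // in c1 c2 c3.
set d1 := cdist n w1 w3 in E1 hsum c1.
set d2 := cdist n w3 w2 in E1 hsum c3.
set d3 := cdist n w2 w1 in E1 hsum c2.
have K := key (d1 - 2) (d2 - 2) (d3 - 2).
have f1 : n - d1.+1 = (d2 - 2 + (d3 - 2) + 2).+1 by lia.
have f2 : n - d2.+1 = (d1 - 2 + (d3 - 2) + 2).+1 by lia.
have f3 : n - d3.+1 = (d1 - 2 + (d2 - 2) + 2).+1 by lia.
have f4 : d1.-1 = (d1 - 2).+1 by lia.
have f5 : d2.-1 = (d2 - 2).+1 by lia.
have f6 : d3.-1 = (d3 - 2).+1 by lia.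
rewrite f1 f2 f3 f4 f5 f6 in E1.
have g1 : n - 3 = (d1 - 2 + (d2 - 2) + (d3 - 2) + 2).+1 by lia.
have g2 : n - (n - 4).+1 = 3 by lia.
have g3 : (n - 4).-1 = (d1 - 2 + (d2 - 2) + (d3 - 2)).+1 by lia.
rewrite g1 g2 g3 in E0.
have b3 : 'C(3, 3) = 1 by [].
have b1 : 'C(2.-1, 3) = 0 by [].
rewrite b3 b1 in E0.
lia.
Qed.
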